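(* Let $M=T^*\mathbb{T}^2=\{(\phi,\theta,s,t):\phi,\theta\in\mathbb{R}/\pi\mathbb{Z},\ s,t\in\mathbb{R}\}$, $Z=\{\phi=0\}$, and let $\omega_1=\frac{1}{\sin^2\phi}d\phi\wedge d\theta+ds\wedge dt$ and $\omega_2=\frac1{\sin^2\phi}d\phi\wedge ds+d\theta\wedge dt$. Then the symplectic manifolds $(M\setminus Z,\omega_1)$ and $(M\setminus Z,\omega_2)$ are symplectomorphic. *)

(* Defs.v *)
From HB Require Import structures.
From mathcomp Require Import all_boot all_order all_algebra.
From mathcomp Require Import all_classical all_reals all_analysis.
Set Implicit Arguments. Unset Strict Implicit. Unset Printing Implicit Defensive.
Import Order.TTheory GRing.Theory Num.Theory.
Import numFieldNormedType.Exports.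
Local Open Scope ring_scope.

(* Coordinates on R^4: index 0 = phi, 1 = theta, 2 = s, 3 = t.
   M = T^* T^2 = R^4 / Lambda with Lambda = pi Z x pi Z x 0 x 0.
   M \ Z is the quotient of the open set U = {x | x_0 notin pi Z} by Lambda. *)

Section Defs.
Variable R : realType.

Definition i0 : 'I_4 := inord 0.
Definition i1 : 'I_4 := inord 1.
Definition i2 : 'I_4 := inord 2.
Definition i3 : 'I_4 := inord 3.

Definition ebasis (i : 'I_4) : 'rV[R]_4 := delta_mx ord0 i.

Definition inLattice (v : 'rV[R]_4) : Prop :=
  exists a b : int, [/\ v ord0 i0 = a%:~R * pi, v ord0 i1 = b%:~R * pi,
                        v ord0 i2 = 0 & v ord0 i3 = 0].

Definition Uset (x : 'rV[R]_4) : Prop := forall k : int, x ord0 i0 != k%:~R * pi.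

Fixpoint ideriv (vs : seq 'I_4) (f : 'rV[R]_4 -> 'rV[R]_4) : 'rV[R]_4 -> 'rV[R]_4 :=
  match vs with
  | [::] => f
  | i :: vs' => fun x => derive (ideriv vs' f) x (ebasis i)
  end.

Definition smooth_on (U : 'rV[R]_4 -> Prop) (f : 'rV[R]_4 -> 'rV[R]_4) : Prop :=
  forall (vs : seq 'I_4) (x : 'rV[R]_4), U x ->
    {for x, continuous (ideriv vs f)} /\
    forall i : 'I_4, derivable (ideriv vs f) x (ebasis i).

Definition omega1 (x u v : 'rV[R]_4) : R :=
  (u ord0 i0 * v ord0 i1 - u ord0 i1 * v ord0 i0) / (sin (x ord0 i0)) ^+ 2
  + (u ord0 i2 * v ord0 i3 - u ord0 i3 * v ord0 i2).

Definition omega2 (x u v : 'rV[R]_4) : R :=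
  (u ord0 i0 * v ord0 i2 - u ord0 i2 * v ord0 i0) / (sin (x ord0 i0)) ^+ 2
  + (u ord0 i1 * v ord0 i3 - u ord0 i3 * v ord0 i1).

(* F : R^4 -> R^4 is a lift of a smooth self-map of U/Lambda *)
Definition lift_map (F : 'rV[R]_4 -> 'rV[R]_4) : Prop :=
  [/\ smooth_on Uset F,
      (forall x, Uset x -> Uset (F x)) &
      (forall x l, Uset x -> inLattice l -> inLattice (F (x + l) - F x))].

(* F, G lift mutually inverse smooth maps of M \ Z, i.e. a diffeomorphism,
   and F pulls omega_2 back to omega_1 *)
Definition symplectomorphism_12 (F G : 'rV[R]_4 -> 'rV[R]_4) : Prop :=
  [/\ lift_map F, lift_map G,
      (forall x, Uset x -> inLattice (G (F x) - x)),
      (forall y, Uset y -> inLattice (F (G y) - y)) &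
      (forall x, Uset x -> forall i j : 'I_4,
          omega2 (F x) (derive F x (ebasis i)) (derive F x (ebasis j))
          = omega1 x (ebasis i) (ebasis j))].

End Defs.

(* Main.v *)
Require Import Defs.
From HB Require Import structures.
From mathcomp Require Import all_boot all_order all_algebra.
From mathcomp Require Import all_classical all_reals all_analysis.
From mathcomp Require Import ring lra zify.
Set Implicit Arguments. Unset Strict Implicit. Unset Printing Implicit Defensive.
Import Order.TTheory GRing.Theory Num.Theory.
Import numFieldNormedType.Exports.
Local Open Scope ring_scope.
Local Open Scope classical_set_scope.

Section S.
Variable R : realType.

Lemma is_derive1_comp (f g : R -> R) (x df dg : R) :
  is_derive x 1 f df -> is_derive (f x) 1 g dg -> is_derive x 1 (g \o f) (dg * df).
Proof.
move=> [d1 v1] [d2 v2]; have d := d1; have dd := d2.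
move/derivable1_diffP: d => d; move/derivable1_diffP: dd => dd.
apply: DeriveDef.
  by apply/derivable1_diffP; apply: differentiable_comp.
by rewrite -derive1E derive1_comp // !derive1E v1 v2.
Qed.

Lemma is_derive1_inv (f : R -> R) (x df : R) : f x != 0 ->
  is_derive x 1 f df -> is_derive x 1 (fun y => (f y)^-1) (- (f x)^-2 * df).
Proof.
move=> fx0 [d v]; apply: DeriveDef; first exact: derivableV.
by rewrite deriveV // v.
Qed.

Definition smooth1 (D : set R) (g : R -> R) :=
  exists gs : nat -> R -> R, gs 0%N = g /\
    forall n y, D y -> is_derive y 1 (gs n) (gs n.+1 y).

Lemma smooth_head (D : set R) (g g' : R -> R) : (forall y, D y -> is_derive y 1 g (g' y)) ->
  smooth1 D g' -> smooth1 D g.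
Proof.
move=> hg [gs [gs0 hs]].
exists (fun n => if n is m.+1 then gs m else g); split => // -[|n] y Dy /=.
  by rewrite gs0; apply: hg.
exact: hs.
Qed.

Definition rstep (r : {poly R}) (pq : {poly R} * {poly R}) :=
  ((pq.1^`() * pq.2 - pq.1 * pq.2^`()) * r, pq.2 * pq.2).

Lemma rat_smooth (D : set R) (b : R -> R) (r p q : {poly R}) :
  (forall y, D y -> is_derive y 1 b r.[b y]) ->
  (forall y, D y -> q.[b y] != 0) ->
  smooth1 D (fun y => p.[b y] / q.[b y]).
Proof.
move=> hb hq.
pose pq n := iter n (rstep r) (p, q).
have inv n y : D y -> (pq n).2.[b y] != 0.
  elim: n => [|n IH] Dy; first exact: hq.
  by rewrite /pq iterS /= hornerM mulf_neq0 // IH.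
exists (fun n y => (pq n).1.[b y] / (pq n).2.[b y]); split => // n y Dy.
set P := (pq n).1; set Q := (pq n).2.
have hP : is_derive y 1 (horner P \o b) (P^`().[b y] * r.[b y]).
  by apply: is_derive1_comp => //=; exact: hb.
have hQ : is_derive y 1 (horner Q \o b) (Q^`().[b y] * r.[b y]).
  by apply: is_derive1_comp => //=; exact: hb.
have hQ' := @is_derive1_inv (horner Q \o b) y _ (inv n y Dy) hQ.
have := is_deriveM hP hQ'.
have -> : ((horner P \o b) * (fun y0 => ((horner Q \o b) y0)^-1)) =
   (fun y => P.[b y] / Q.[b y]) by apply/funext => z.
move=> H; apply: is_derive_eq H _.
rewrite /pq iterS -/(pq n) /rstep /= -/P -/Q.
have Q0 := inv n y Dy; rewrite -/Q in Q0.
rewrite !hornerE /= -![_ *: _]/(_ * _).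
move: Q0; set a := P.[b y]; set c := Q.[b y]; set d := Q^`().[b y]; set e := P^`().[b y]; set f := r.[b y] => Q0.
by field.
Qed.


Definition cot (y : R) := cos y / sin y.

Lemma is_derive_cot y : sin y != 0 -> is_derive y 1 cot (- (1 + cot y ^+ 2)).
Proof.
move=> s0.
have h1 := @is_derive1_inv sin y _ s0 (is_derive_sin y).
have := is_deriveM (is_derive_cos y) h1.
have -> : (cos * (fun y0 => (sin y0)^-1)) = cot by apply/funext => z.
move=> H; apply: is_derive_eq H _.
rewrite -![_ *: _]/(_ * _) /cot.
move: s0; set s := sin y; set c := cos y => s0.
by field.
Qed.

Lemma trig_nat (z : R) (n : nat) :
  sin (z + n%:R * pi) = (-1) ^+ n * sin z /\
  cos (z + n%:R * pi) = (-1) ^+ n * cos z.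
Proof.
elim: n => [|n [IH1 IH2]]; first by rewrite mul0r addr0 !mul1r.
have -> : z + n.+1%:R * pi = (z + n%:R * pi) + pi.
  by rewrite -addn1 natrD mulrDl mul1r addrA.
by rewrite sinDpi cosDpi IH1 IH2 exprS !mulN1r !mulNr.
Qed.

Lemma trig_int (z : R) (a : int) : exists s : R, [/\ s * s = 1,
  sin (z + a%:~R * pi) = s * sin z & cos (z + a%:~R * pi) = s * cos z].
Proof.
case: a => n.
  have [h1 h2] := trig_nat z n.
  have -> : (Posz n)%:~R = n%:R :> R by [].
  exists ((-1) ^+ n); split => //.
  by rewrite -exprMn mulN1r opprK expr1n.
have [h1 h2] := trig_nat (z + (Negz n)%:~R * pi) n.+1.
have e : z + (Negz n)%:~R * pi + n.+1%:R * pi = z.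
  by rewrite NegzE mulrNz -addrA -mulrDl addNr mul0r addr0.
rewrite e in h1 h2.
have ss : (-1) ^+ n.+1 * (-1) ^+ n.+1 = 1 :> R.
  by rewrite -exprMn mulN1r opprK expr1n.
exists ((-1) ^+ n.+1); split => //.
  by rewrite h1 mulrA ss mul1r.
by rewrite h2 mulrA ss mul1r.
Qed.

Lemma decomp (z : R) : exists a : int, 0 <= z - a%:~R * pi < pi.
Proof.
exists (Num.floor (z / pi)).
have p0 := pi_gt0 R.
have h1 := Num.Theory.floor_le (z / pi).
have h2 := Num.Theory.floorD1_gt (z / pi).
set a := Num.floor (z / pi) in h1 h2 *.
rewrite intrD in h2.
rewrite subr_ge0 ltrBlDr.
rewrite ler_pdivlMr // in h1.
rewrite ltr_pdivrMr // mulrDl mul1r in h2.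
by rewrite h1 addrC.
Qed.

Lemma sin_eq0 (z : R) : sin z = 0 -> exists a : int, z = a%:~R * pi.
Proof.
move=> s0; have [a /andP [w0 wp]] := decomp z.
have [s [_ hs _]] := trig_int z (- a).
rewrite mulrNz mulNr s0 mulr0 in hs.
case: (ltrgt0P (z - a%:~R * pi)) w0 => // [wgt0|weq0] _.
  have := @sin_gt0_pi R (z - a%:~R * pi); rewrite wgt0 wp hs ltxx.
  by move=> /(_ isT).
by exists a; apply/eqP; rewrite -subr_eq0 weq0.
Qed.

Lemma cot_int (z : R) (a : int) : cot (z + a%:~R * pi) = cot z.
Proof.
have [s [ss hs hc]] := trig_int z a.
rewrite /cot hs hc invfM mulrACA.
have s0 : s != 0 by apply/eqP => s0; move: ss; rewrite s0 mul0r; apply/eqP; rewrite eq_sym oner_eq0.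
by rewrite divff // mul1r.
Qed.


Lemma sin_pihalfB (w : R) : sin (pi / 2 - w) = cos w.
Proof. by rewrite -opprB sinN sinBpihalf opprK. Qed.

Lemma cos_pihalfB (w : R) : cos (pi / 2 - w) = sin w.
Proof. by rewrite -opprB cosN cosBpihalf. Qed.

Lemma cot_pihalfB (w : R) : cot (pi / 2 - w) = tan w.
Proof. by rewrite /cot sin_pihalfB cos_pihalfB. Qed.

Lemma cot_pihalfD (w : R) : cot (pi / 2 + w) = - tan w.
Proof. by rewrite /cot addrC sinDpihalf cosDpihalf /tan mulNr. Qed.

Lemma sin_pihalfD (w : R) : sin (pi / 2 + w) = cos w.
Proof. by rewrite addrC sinDpihalf. Qed.

Lemma nonint_pi (w : R) : 0 < w < pi -> forall k : int, w != k%:~R * pi.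
Proof.
move=> /andP [w0 wp] k; apply/eqP => e; rewrite e in w0 wp.
have p0 := pi_gt0 R.
rewrite pmulr_lgt0 // ltr0z in w0.
rewrite -{2}(mul1r pi) ltr_pM2r // ltrz1 in wp.
by lia.
Qed.

Lemma atan_range (s : R) : 0 < pi / 2 + atan s < pi /\ 0 < pi / 2 - atan s < pi.
Proof.
have h1 := atan_gtNpi2 s; have h2 := atan_ltpi2 s.
have p0 := pi_gt0 R.
split; apply/andP; split; lra.
Qed.

Lemma tan_pihalfB (w : R) : tan (pi / 2 - w) = cot w.
Proof. by rewrite /tan /cot sin_pihalfB cos_pihalfB. Qed.

Lemma atan_cot (z : R) : sin z != 0 ->
  exists a : int, pi / 2 - atan (cot z) = z + a%:~R * pi.
Proof.
move=> sz; have [a /andP [w0 wp]] := decomp z.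
have ew : z - a%:~R * pi = z + (- a)%:~R * pi by rewrite mulrNz mulNr.
set w := z - a%:~R * pi in w0 wp ew.
have wn0 : w != 0.
  apply/eqP => w00; move: sz; have [s [_ hs _]] := trig_int w a.
  have e : w + a%:~R * pi = z by rewrite /w subrK.
  by rewrite e in hs; rewrite hs w00 sin0 mulr0 eqxx.
have cw : cot z = cot w by rewrite ew cot_int.
have p0 := pi_gt0 R.
have wpos : 0 < w by rewrite lt_neqAle eq_sym wn0.
have -> : atan (cot z) = pi / 2 - w.
  rewrite cw -tan_pihalfB tanK //.
  rewrite in_itv /=; apply/andP; split; lra.
by exists (- a); rewrite -ew; lra.
Qed.


Local Notation V4 := 'rV[R]_4.

Lemma ebasis_coord (i k : 'I_4) : (ebasis R i : V4) ord0 k = (k == i)%:R.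
Proof. by rewrite /ebasis mxE eqxx. Qed.

Lemma coord_derive (h : R -> R) (k i : 'I_4) (x : V4) (d : R) :
  is_derive (x ord0 k) ((k == i)%:R : R) h d ->
  is_derive x (ebasis R i) (fun y : V4 => h (y ord0 k)) d.
Proof.
move=> [dv dval].
have E : (fun t : R => t^-1 *: (((fun y : V4 => h (y ord0 k)) \o shift x) (t *: ebasis R i) - h (x ord0 k)))
  = (fun t : R => t^-1 *: ((h \o shift (x ord0 k)) (t *: ((k == i)%:R : R)) - h (x ord0 k))).
  apply/funext => t /=; congr (_ *: (h _ - _)).
  by rewrite !mxE eqxx.
split; first by rewrite /derivable E.
by rewrite /derive E.
Qed.

Lemma is_derive_row (M : V4 -> V4) (x v : V4) (dM : V4) :
  (forall j, is_derive x v (fun y => M y ord0 j) (dM ord0 j)) -> is_derive x v M dM.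
Proof.
move=> H.
have dM' : derivable M x v.
  by apply/derivable_mxP => a j; rewrite (ord1 a); case: (H j).
split => //.
rewrite derive_mx //; apply/matrixP => a j; rewrite (ord1 a) mxE.
by case: (H j).
Qed.

Definition Rep (ks : 'I_4 -> 'I_4) (gss : 'I_4 -> nat -> R -> R)
  (vs : seq 'I_4) (x : V4) : V4 :=
  \row_j (if all (pred1 (ks j)) vs then gss j (size vs) (x ord0 (ks j)) else 0).

Definition Hc (ks : 'I_4 -> 'I_4) (gss : 'I_4 -> nat -> R -> R)
  (vs : seq 'I_4) j : R -> R :=
  if all (pred1 (ks j)) vs then gss j (size vs) else fun _ => 0.

Lemma Rep_comp ks gss vs j :
  (fun y => Rep ks gss vs y ord0 j) = (fun y => Hc ks gss vs j (y ord0 (ks j))).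
Proof. by apply/funext => y; rewrite mxE /Hc; case: ifP. Qed.

Lemma Rep_derive ks gss (Ds : 'I_4 -> set R) vs (x : V4) i :
  (forall j n y, Ds j y -> is_derive y 1 (gss j n) (gss j n.+1 y)) ->
  (forall j, Ds j (x ord0 (ks j))) ->
  is_derive x (ebasis R i) (Rep ks gss vs) (Rep ks gss (i :: vs) x).
Proof.
move=> hg hD; apply: is_derive_row => j; rewrite Rep_comp.
apply: coord_derive; rewrite mxE /Hc /=.
case: eqP => [ki|kni].
  rewrite ki eqxx /=.
  case: ifP => _; first by rewrite -ki; exact: hg.
  exact: is_derive_cst.
have -> : (i == ks j) = false by apply/eqP => e; apply: kni.
exact: is_derive0.
Qed.

Lemma cont_sum n (g : 'I_n -> V4 -> V4) (x : V4) :
  (forall j, {for x, continuous (g j)}) ->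
  {for x, continuous (fun y => \sum_(j < n) g j y)}.
Proof.
elim: n g => [|n IH] g H.
  have -> : (fun y => \sum_(j < 0) g j y) = cst 0.
    by apply/funext => y; rewrite big_ord0.
  exact: cst_continuous.
have -> : (fun y => \sum_(j < n.+1) g j y) =
  (fun y => \sum_(j < n) g (widen_ord (leqnSn n) j) y) + g ord_max.
  by apply/funext => y; rewrite big_ord_recr.
apply: cvgD; first exact: nbhs_filter.
  by apply: IH => j; apply: H.
exact: H.
Qed.

Lemma Rep_cont ks gss (Ds : 'I_4 -> set R) vs (x : V4) :
  (forall j n y, Ds j y -> is_derive y 1 (gss j n) (gss j n.+1 y)) ->
  (forall j, Ds j (x ord0 (ks j))) ->
  {for x, continuous (Rep ks gss vs)}.
Proof.
move=> hg hD.
have -> : Rep ks gss vs = (fun y => \sum_(j < 4) Hc ks gss vs j (y ord0 (ks j)) *: delta_mx ord0 j).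
  apply/funext => y; rewrite [LHS]row_sum_delta; apply: eq_bigr => j _.
  by rewrite mxE /Hc; case: ifP.
apply: cont_sum => j.
apply: continuousZr_tmp.
have hc : {for (x ord0 (ks j)), continuous (Hc ks gss vs j)}.
  rewrite /Hc; case: ifP => _; last exact: cst_continuous.
  apply: differentiable_continuous; apply/derivable1_diffP.
  by case: (hg j (size vs) _ (hD j)).
have h := continuous_comp (@coord_continuous R 1 4 ord0 (ks j) x) hc. exact: h.
Qed.


Section Smooth.
Variables (ks : 'I_4 -> 'I_4) (gss : 'I_4 -> nat -> R -> R) (Ds : 'I_4 -> set R)
  (S : set V4).
Hypothesis oS : open S.
Hypothesis hS : forall x, S x -> forall j, Ds j (x ord0 (ks j)).
Hypothesis hg : forall j n y, Ds j y -> is_derive y 1 (gss j n) (gss j n.+1 y).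

Lemma nearS x : S x -> \forall y \near x, S y.
Proof. by move=> Sx; have := oS; rewrite openE; apply. Qed.

Lemma ideriv_Rep vs x : S x -> ideriv vs (Rep ks gss [::]) x = Rep ks gss vs x.
Proof.
elim: vs x => [|i vs IH] x Sx //=.
rewrite (@near_eq_derive R _ _ _ (Rep ks gss vs) x (ebasis R i)).
  by have [_ ->] := @Rep_derive ks gss Ds vs x i hg (hS Sx).
near=> y; apply: IH; near: y; exact: nearS.
Unshelve. all: by end_near. Qed.

Lemma near_Rep vs x : S x -> {near x, Rep ks gss vs =1 ideriv vs (Rep ks gss [::])}.
Proof.
move=> Sx; near=> y; rewrite ideriv_Rep //; near: y; exact: nearS.
Unshelve. all: by end_near. Qed.

Lemma smooth_Rep (U : set V4) : (forall x, U x -> S x) ->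
  smooth_on U (Rep ks gss [::]).
Proof.
move=> US vs x Ux; have Sx := US x Ux; split.
  rewrite /prop_for /continuous_at (ideriv_Rep vs Sx).
  apply: cvg_trans (near_eq_cvg (near_Rep vs Sx)) _.
  exact: (@Rep_cont ks gss Ds vs x hg (hS Sx)).
move=> i; apply: (near_eq_derivable (near_Rep vs Sx)).
by case: (@Rep_derive ks gss Ds vs x i hg (hS Sx)).
Qed.

Lemma derive_Rep x i : S x ->
  'D_(ebasis R i) (Rep ks gss [::]) x = Rep ks gss [:: i] x.
Proof. by move=> Sx; have := ideriv_Rep [:: i] Sx. Qed.

End Smooth.



Lemma smooth_build (kk : 'I_4 -> 'I_4) (g dg : 'I_4 -> R -> R) (DD : 'I_4 -> set R)
  (SS UU : set V4) :
  open SS -> (forall x, UU x -> SS x) ->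
  (forall x, SS x -> forall j, DD j (x ord0 (kk j))) ->
  (forall j, smooth1 (DD j) (g j)) ->
  (forall j y, DD j y -> is_derive y 1 (g j) (dg j y)) ->
  smooth_on UU (fun x : V4 => \row_j g j (x ord0 (kk j)) : V4) /\
  forall x i, SS x -> 'D_(ebasis R i) (fun x : V4 => \row_j g j (x ord0 (kk j)) : V4) x =
     \row_j (if i == kk j then dg j (x ord0 (kk j)) else 0).
Proof.
move=> oS US hS hsm hdg.
pose gss j := sval (cid (hsm j)).
have hgss j : gss j 0%N = g j /\ forall n y, DD j y -> is_derive y 1 (gss j n) (gss j n.+1 y).
  exact: (svalP (cid (hsm j))).
have hg j n y : DD j y -> is_derive y 1 (gss j n) (gss j n.+1 y).
  by case: (hgss j) => _; apply.
have eF : (fun x : V4 => \row_j g j (x ord0 (kk j)) : V4) = Rep kk gss [::].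
  apply/funext => x; apply/matrixP => a j; rewrite !mxE /=.
  by case: (hgss j) => ->.
rewrite eF; split; first exact: (smooth_Rep oS hS hg).
move=> x i Sx; rewrite (derive_Rep oS hS hg i Sx).
apply/matrixP => a j; rewrite !mxE /= andbT.
case: ifP => // _.
have h1 := hg j 0%N _ (hS _ Sx j).
have h2 := hdg j _ (hS _ Sx j).
case: (hgss j) h1 => -> _ [_ <-].
by case: h2 => _ <-.
Qed.


Lemma i0v : nat_of_ord i0 = 0%N. Proof. by rewrite /i0 inordK. Qed.
Lemma i1v : nat_of_ord i1 = 1%N. Proof. by rewrite /i1 inordK. Qed.
Lemma i2v : nat_of_ord i2 = 2%N. Proof. by rewrite /i2 inordK. Qed.
Lemma i3v : nat_of_ord i3 = 3%N. Proof. by rewrite /i3 inordK. Qed.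

Lemma e01 : (i0 == i1) = false. Proof. by rewrite -val_eqE /= i0v i1v. Qed.
Lemma e02 : (i0 == i2) = false. Proof. by rewrite -val_eqE /= i0v i2v. Qed.
Lemma e03 : (i0 == i3) = false. Proof. by rewrite -val_eqE /= i0v i3v. Qed.
Lemma e10 : (i1 == i0) = false. Proof. by rewrite -val_eqE /= i1v i0v. Qed.
Lemma e12 : (i1 == i2) = false. Proof. by rewrite -val_eqE /= i1v i2v. Qed.
Lemma e13 : (i1 == i3) = false. Proof. by rewrite -val_eqE /= i1v i3v. Qed.
Lemma e20 : (i2 == i0) = false. Proof. by rewrite -val_eqE /= i2v i0v. Qed.
Lemma e21 : (i2 == i1) = false. Proof. by rewrite -val_eqE /= i2v i1v. Qed.
Lemma e23 : (i2 == i3) = false. Proof. by rewrite -val_eqE /= i2v i3v. Qed.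
Lemma e30 : (i3 == i0) = false. Proof. by rewrite -val_eqE /= i3v i0v. Qed.
Lemma e31 : (i3 == i1) = false. Proof. by rewrite -val_eqE /= i3v i1v. Qed.
Lemma e32 : (i3 == i2) = false. Proof. by rewrite -val_eqE /= i3v i2v. Qed.


Lemma cases4 (i : 'I_4) : [\/ i = i0, i = i1, i = i2 | i = i3].
Proof.
case: i => [[|[|[|[|?]]]] Hi] //.
- by constructor 1; apply/val_inj; rewrite /= i0v.
- by constructor 2; apply/val_inj; rewrite /= i1v.
- by constructor 3; apply/val_inj; rewrite /= i2v.
- by constructor 4; apply/val_inj; rewrite /= i3v.
Qed.

Definition Sset : set V4 := [set x | sin (x ord0 i0) != 0].

Lemma open_Sset : open Sset.
Proof.
have -> : Sset = (fun x : V4 => sin (x ord0 i0)) @^-1` [set y | y != 0] by [].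
apply: open_comp; last exact: open_neq.
move=> x _; apply: (continuous_comp (@coord_continuous R 1 4 ord0 i0 x)).
exact: continuous_sin.
Qed.

Lemma U_S (x : V4) : Uset x -> Sset x.
Proof.
by move=> Ux; apply/eqP => /sin_eq0 [a ea]; move: (Ux a); rewrite ea eqxx.
Qed.

Lemma sm_id (D : set R) : smooth1 D (fun y => y).
Proof.
have := @rat_smooth D (fun y => y) 1 'X 1.
have -> : (fun y => 'X.[y] / (1 : {poly R}).[y]) = (fun y => y).
  by apply/funext => y; rewrite hornerX hornerC divr1.
apply.
  by move=> y _; rewrite hornerC; exact: is_derive_id.
by move=> y _; rewrite hornerC oner_neq0.
Qed.

Lemma der_atan (c e y : R) : is_derive y 1 (fun y => c + e * atan y) (e * (1 + y ^+ 2)^-1).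
Proof.
have := is_deriveD (is_derive_cst c y 1) (is_deriveZ e (is_derive1_atan y)).
have -> : (cst c + e \*: atan) = (fun y => c + e * atan y) by apply/funext.
move=> H; apply: is_derive_eq H _.
by rewrite add0r.
Qed.

Lemma sm_atan (c e : R) : smooth1 setT (fun y => c + e * atan y).
Proof.
apply: (@smooth_head _ _ (fun y => e * (1 + y ^+ 2)^-1)).
  by move=> y _; exact: der_atan.
have := @rat_smooth setT (fun y => y) 1 e%:P ('X^2 + 1).
have -> : (fun y => e%:P.[y] / ('X^2 + 1 : {poly R}).[y]) = (fun y => e * (1 + y ^+ 2)^-1).
  by apply/funext => y; rewrite !hornerE addrC.
apply.
  by move=> y _; rewrite hornerC; exact: is_derive_id.
move=> y _; rewrite !hornerE; apply: lt0r_neq0.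
by have := sqr_ge0 y; lra.
Qed.

Lemma der_cot (e y : R) : sin y != 0 ->
  is_derive y 1 (fun y => e * cot y) (e * - (1 + cot y ^+ 2)).
Proof.
move=> sy.
have := is_deriveZ e (is_derive_cot sy).
have -> : (e \*: cot) = (fun y => e * cot y) by apply/funext.
by [].
Qed.

Lemma sm_cot (e : R) : smooth1 [set y | sin y != 0] (fun y => e * cot y).
Proof.
have := @rat_smooth [set y | sin y != 0] cot (- (1 + 'X^2)) (e%:P * 'X) 1.
have -> : (fun y => (e%:P * 'X).[cot y] / (1 : {poly R}).[cot y]) = (fun y => e * cot y).
  by apply/funext => y; rewrite !hornerE divr1.
apply.
  by move=> y sy; rewrite !hornerE; apply: is_derive_cot.
by move=> y _; rewrite hornerC oner_neq0.
Qed.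


Definition kF (j : 'I_4) : 'I_4 :=
  match nat_of_ord j with 0 => i2 | 1 => i1 | 2 => i3 | _ => i0 end.
Definition gF (j : 'I_4) : R -> R :=
  match nat_of_ord j with 0 => fun y => pi / 2 + 1 * atan y | 1 => fun y => y
  | 2 => fun y => y | _ => fun y => 1 * cot y end.
Definition dgF (j : 'I_4) : R -> R :=
  match nat_of_ord j with 0 => fun y => 1 * (1 + y ^+ 2)^-1 | 1 => fun _ => 1
  | 2 => fun _ => 1 | _ => fun y => 1 * - (1 + cot y ^+ 2) end.
Definition DF (j : 'I_4) : set R :=
  match nat_of_ord j with 0 => setT | 1 => setT | 2 => setT
  | _ => [set y | sin y != 0] end.

Definition kG (j : 'I_4) : 'I_4 :=
  match nat_of_ord j with 0 => i3 | 1 => i1 | 2 => i0 | _ => i2 end.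
Definition gG (j : 'I_4) : R -> R :=
  match nat_of_ord j with 0 => fun y => pi / 2 + (-1) * atan y | 1 => fun y => y
  | 2 => fun y => (-1) * cot y | _ => fun y => y end.
Definition dgG (j : 'I_4) : R -> R :=
  match nat_of_ord j with 0 => fun y => (-1) * (1 + y ^+ 2)^-1 | 1 => fun _ => 1
  | 2 => fun y => (-1) * - (1 + cot y ^+ 2) | _ => fun _ => 1 end.
Definition DG (j : 'I_4) : set R :=
  match nat_of_ord j with 0 => setT | 1 => setT | 2 => [set y | sin y != 0]
  | _ => setT end.

Definition Fm (x : V4) : V4 := \row_j gF j (x ord0 (kF j)).
Definition Gm (x : V4) : V4 := \row_j gG j (x ord0 (kG j)).

Lemma F_build : smooth_on (@Uset R) Fm /\ forall x i, Sset x ->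
  'D_(ebasis R i) Fm x = \row_j (if i == kF j then dgF j (x ord0 (kF j)) else 0).
Proof.
apply: (@smooth_build kF gF dgF DF _ _ open_Sset U_S).
- by move=> x Sx [[|[|[|[|?]]]] Hj] //=.
- move=> [[|[|[|[|?]]]] Hj] //=; [exact: sm_atan | exact: sm_id | exact: sm_id | exact: sm_cot].
- move=> [[|[|[|[|?]]]] Hj] y //=.
  + by move=> _; exact: der_atan.
  + by move=> _; exact: is_derive_id.
  + by move=> _; exact: is_derive_id.
  + exact: der_cot.
Qed.

Lemma G_build : smooth_on (@Uset R) Gm /\ forall x i, Sset x ->
  'D_(ebasis R i) Gm x = \row_j (if i == kG j then dgG j (x ord0 (kG j)) else 0).
Proof.
apply: (@smooth_build kG gG dgG DG _ _ open_Sset U_S).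
- by move=> x Sx [[|[|[|[|?]]]] Hj] //=.
- move=> [[|[|[|[|?]]]] Hj] //=; [exact: sm_atan | exact: sm_id | exact: sm_cot | exact: sm_id].
- move=> [[|[|[|[|?]]]] Hj] y //=.
  + by move=> _; exact: der_atan.
  + by move=> _; exact: is_derive_id.
  + exact: der_cot.
  + by move=> _; exact: is_derive_id.
Qed.


Lemma subE (A B : V4) j : (A - B) ord0 j = A ord0 j - B ord0 j.
Proof. by rewrite !mxE. Qed.
Lemma addE (A B : V4) j : (A + B) ord0 j = A ord0 j + B ord0 j.
Proof. by rewrite !mxE. Qed.

Lemma F0 x : Fm x ord0 i0 = pi / 2 + atan (x ord0 i2).
Proof. by rewrite /Fm mxE /gF /kF i0v mul1r. Qed.
Lemma F1 x : Fm x ord0 i1 = x ord0 i1.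
Proof. by rewrite /Fm mxE /gF /kF i1v. Qed.
Lemma F2 x : Fm x ord0 i2 = x ord0 i3.
Proof. by rewrite /Fm mxE /gF /kF i2v. Qed.
Lemma F3 x : Fm x ord0 i3 = cot (x ord0 i0).
Proof. by rewrite /Fm mxE /gF /kF i3v mul1r. Qed.
Lemma G0 x : Gm x ord0 i0 = pi / 2 - atan (x ord0 i3).
Proof. by rewrite /Gm mxE /gG /kG i0v mulN1r. Qed.
Lemma G1 x : Gm x ord0 i1 = x ord0 i1.
Proof. by rewrite /Gm mxE /gG /kG i1v. Qed.
Lemma G2 x : Gm x ord0 i2 = - cot (x ord0 i0).
Proof. by rewrite /Gm mxE /gG /kG i2v mulN1r. Qed.
Lemma G3 x : Gm x ord0 i3 = x ord0 i2.
Proof. by rewrite /Gm mxE /gG /kG i3v. Qed.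

Lemma F_U x : Uset x -> Uset (Fm x).
Proof. by move=> _ k; rewrite F0; apply: nonint_pi; case: (atan_range (x ord0 i2)). Qed.
Lemma G_U x : Uset x -> Uset (Gm x).
Proof. by move=> _ k; rewrite G0; apply: nonint_pi; case: (atan_range (x ord0 i3)). Qed.

Lemma F_per x l : Uset x -> inLattice l -> inLattice (Fm (x + l) - Fm x).
Proof.
move=> _ [a [b [l0 l1 l2 l3]]]; exists 0, b.
rewrite !subE F0 F1 F2 F3 F0 F1 F2 F3 !addE l0 l1 l2 l3 addr0 cot_int.
by rewrite !subrr mul0r; split => //; rewrite addrC addKr.
Qed.

Lemma G_per x l : Uset x -> inLattice l -> inLattice (Gm (x + l) - Gm x).
Proof.
move=> _ [a [b [l0 l1 l2 l3]]]; exists 0, b.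
rewrite !subE G0 G1 G2 G3 G0 G1 G2 G3 !addE l0 l1 l2 l3 addr0 cot_int.
by rewrite !subrr mul0r; split => //; rewrite addrC addKr.
Qed.

Lemma GF x : Uset x -> inLattice (Gm (Fm x) - x).
Proof.
move=> Ux; have Sx := U_S Ux.
have [a ha] := atan_cot Sx.
exists a, 0; rewrite !subE G0 G1 G2 G3 F0 F1 F2 F3 ha.
rewrite cot_pihalfD opprK atanK !subrr mul0r; split => //.
by rewrite addrC addKr.
Qed.

Lemma FG x : Uset x -> inLattice (Fm (Gm x) - x).
Proof.
move=> Ux; have Sx := U_S Ux.
have [a ha] := atan_cot Sx.
exists a, 0; rewrite !subE F0 F1 F2 F3 G0 G1 G2 G3 atanN ha.
rewrite cot_pihalfB atanK !subrr mul0r; split => //.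
by rewrite addrC addKr.
Qed.


Lemma sinF2 (s : R) : sin (pi / 2 + atan s) ^+ 2 = (1 + s ^+ 2)^-1.
Proof.
rewrite sin_pihalfD cos_atan exprVn sqr_sqrtr //.
by have := sqr_ge0 s; lra.
Qed.

Lemma sin2cot (z : R) : sin z != 0 -> sin z ^+ 2 = (1 + cot z ^+ 2)^-1.
Proof.
move=> sz; have := cos2Dsin2 z; rewrite /cot => e.
have e2 : 1 + (cos z / sin z) ^+ 2 = (sin z ^+ 2)^-1.
  move: e sz; set c := cos z; set t := sin z => e sz.
  rewrite expr_div_n (_ : c ^+ 2 = 1 - t ^+ 2); last by rewrite -e addrK.
  by field.
by rewrite e2 invrK.
Qed.

Lemma F_omega x : Uset x -> forall i j : 'I_4,
  omega2 (Fm x) ('D_(ebasis R i) Fm x) ('D_(ebasis R j) Fm x) =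
  omega1 x (ebasis R i) (ebasis R j).
Proof.
move=> Ux i j; have Sx := U_S Ux.
have [_ dF] := F_build.
rewrite !dF // /omega2 /omega1 F0 /ebasis !mxE /kF /dgF i0v i1v i2v i3v /=.
rewrite sinF2 (sin2cot Sx).
have hs : (1 + x ord0 i2 ^+ 2) != 0.
  by apply: lt0r_neq0; have := sqr_ge0 (x ord0 i2); lra.
have hc : (1 + cot (x ord0 i0) ^+ 2) != 0.
  by apply: lt0r_neq0; have := sqr_ge0 (cot (x ord0 i0)); lra.
move: hs hc; set s := 1 + _ ^+ 2; set c := 1 + _ ^+ 2 => hs hc.
case: (cases4 i) => ->; case: (cases4 j) => ->;
  rewrite ?eqxx ?e01 ?e02 ?e03 ?e10 ?e12 ?e13 ?e20 ?e21 ?e23 ?e30 ?e31 ?e32 /=.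
all: by field; rewrite ?hs ?hc.
Qed.


Lemma main : exists F G : V4 -> V4, symplectomorphism_12 F G.
Proof.
exists Fm, Gm; split.
- split; [exact: (proj1 F_build) | exact: F_U | exact: F_per].
- split; [exact: (proj1 G_build) | exact: G_U | exact: G_per].
- exact: GF.
- exact: FG.
- exact: F_omega.
Qed.

End S.

Theorem lemmaA2 (R : realType) :
  exists F G : 'rV[R]_4 -> 'rV[R]_4, symplectomorphism_12 F G.
Proof. exact: main. Qed.
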